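(* Let $y$ be a string over an alphabet $\Sigma$ whose last character occurs nowhere else in $y$. For any backward edge $((x,x^R),\alpha^R,(\alpha x, x^R\alpha^R))$ of the affix tree $\mathrm{ATree}(y)$ (with $\alpha\in\Sigma^+$), we have: $x\in\mathcal{L}$ and $\alpha x\notin\mathcal{L}$ if and only if $(x,a,ax)$ is an implicit modified Weiner link of $\mathrm{ST}(y)$, where $a=\alpha[|\alpha|]$ is the last character of $\alpha$.
   Context: $\mathrm{Substr}(y)$ is the set of substrings of $y$; $x^R$ is the reversal of $x$. $\mathrm{BegPos}(x)=\{i\mid y[i..i+|x|-1]=x\}$, $\mathrm{EndPos}(x)=\{i\mid y[i-|x|+1..i]=x\}$. For $x\in\mathrm{Substr}(y)$, $\overrightarrow{x}$ is the longest string $z$ with $\mathrm{BegPos}(z)=\mathrm{BegPos}(x)$ and $\overleftarrow{x}$ is the longest string $z$ with $\mathrm{EndPos}(z)=\mathrm{EndPos}(x)$. $\mathcal{L}=\{\overrightarrow{x}\mid x\in\mathrm{Substr}(y)\}$, $\mathcal{R}=\{\overleftarrow{x}\mid x\in\mathrm{Substr}(y)\}$. The suffix tree $\mathrm{ST}(y)$ has node set $\mathcal{L}$. The set of modified Weiner links of $\mathrm{ST}(y)$ is $\{(x,a,ax)\mid a\in\Sigma, x\in\mathcal{L}, ax\in\mathrm{Substr}(y)\}$; such a link is explicit if $ax\in\mathcal{L}$ and implicit otherwise. $\mathrm{ATree}(y)$ has node set $V_A=\{(x,x^R)\mid x\in\mathcal{L}\cup\mathcal{R}\}$ and backward edge set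 $\{((x,x^R),\alpha^R,(\alpha x, x^R\alpha^R))\mid x^R, x^R\alpha^R\in\{z^R : z\in\mathcal{L}\cup\mathcal{R}\}, \alpha\in\Sigma^+, x^R\alpha^R[1..i]\notin\{z^R : z\in\mathcal{L}\cup\mathcal{R}\}\ \text{for all }1\le i<|\alpha|\}$. *)

(* Defs.v *)
(* Positions are 0-based: a string x "begins" at i (0 <= i <= |y|) when
   y[i .. i+|x|-1] = x, and "ends" at i (0 <= i <= |y|) when
   y[i-|x| .. i-1] = x.  The empty string thus begins/ends at every
   position 0..|y| (so it is its own right/left extension = the root). *)
From mathcomp Require Import all_boot.
Set Implicit Arguments. Unset Strict Implicit. Unset Printing Implicit Defensive.

Section Strings.
Variable T : eqType.
Implicit Types (x y z w alpha : seq T) (a : T).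

Definition Substr y x : Prop := infix x y.

Definition BegPos y x : seq nat :=
  [seq i <- iota 0 (size y).+1 |
     (i + size x <= size y) && (take (size x) (drop i y) == x)].

Definition EndPos y x : seq nat :=
  [seq i <- iota 0 (size y).+1 |
     (size x <= i) && (take (size x) (drop (i - size x) y) == x)].

Definition is_rext y x z : Prop :=
  BegPos y z = BegPos y x /\
  forall w, BegPos y w = BegPos y x -> size w <= size z.

Definition is_lext y x z : Prop :=
  EndPos y z = EndPos y x /\
  forall w, EndPos y w = EndPos y x -> size w <= size z.

Definition inL y z : Prop := exists x, Substr y x /\ is_rext y x z.
Definition inR y z : Prop := exists x, Substr y x /\ is_lext y x z.

Definition inRevLR y w : Prop := exists z, (inL y z \/ inR y z) /\ w = rev z.

Definition backward_edge y x alpha : Prop :=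
  alpha <> [::] /\
  inRevLR y (rev x) /\
  inRevLR y (rev x ++ rev alpha) /\
  (forall i, 0 < i < size alpha -> ~ inRevLR y (rev x ++ take i (rev alpha))).

Definition weiner_link y x a : Prop := inL y x /\ Substr y (a :: x).

Definition implicit_weiner_link y x a : Prop :=
  weiner_link y x a /\ ~ inL y (a :: x).

End Strings.

(* Main.v *)
Require Import Defs.
From mathcomp Require Import all_boot.
From mathcomp Require Import zify.
From Stdlib Require Import Classical.

Set Implicit Arguments. Unset Strict Implicit.
Section Aux.
Variable T : eqType.
Implicit Types (x y z w v p s : seq T).

Lemma begE y z i : (i \in BegPos y z) <-> exists p s, y = p ++ z ++ s /\ size p = i.
Proof.
rewrite /BegPos mem_filter mem_iota add0n; split.
  case/andP=> /andP[Hle /eqP Hz] _.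
  exists (take i y), (drop (size z) (drop i y)); split; last first.
    by rewrite size_take; case: ltnP => //; lia.
  by rewrite -{1}Hz !cat_take_drop.
case=> p [s [-> <-]]; rewrite !size_cat drop_size_cat // take_size_cat //.
rewrite eqxx; apply/andP; split; [apply/andP; split=> //|]; lia.
Qed.

Lemma endE y z e : (e \in EndPos y z) <-> exists p s, y = p ++ z ++ s /\ size p + size z = e.
Proof.
rewrite /EndPos mem_filter mem_iota add0n; split.
  case/andP=> /andP[Hle /eqP Hz] Hr.
  exists (take (e - size z) y), (drop (size z) (drop (e - size z) y)); split; last first.
    rewrite size_take; case: ltnP => //; lia.
  by rewrite -{2}Hz !cat_take_drop.
case=> p [s [-> <-]]; rewrite !size_cat addnK drop_size_cat // take_size_cat //.
rewrite eqxx; apply/andP; split; [apply/andP; split=> //|]; lia.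
Qed.

Lemma begEq y z w : (forall i, (exists p s, y = p ++ z ++ s /\ size p = i) <->
                               (exists p s, y = p ++ w ++ s /\ size p = i)) ->
  BegPos y z = BegPos y w.
Proof.
move=> H; apply: eq_in_filter => i Hi.
have E : forall u, (i + size u <= size y) && (take (size u) (drop i y) == u)
                   = (i \in BegPos y u).
  by move=> u; rewrite /BegPos mem_filter Hi andbT.
rewrite !E; apply/idP/idP => /begE Hb; apply/begE; by apply/H.
Qed.

Lemma subE y z : Substr y z <-> exists p s, y = p ++ z ++ s.
Proof. by rewrite /Substr; split => /infixP. Qed.

Lemma inL_sub y z : inL y z -> Substr y z.
Proof.
case=> x [/subE [p [s Hy]] [Hb _]].
have : size p \in BegPos y x by apply/begE; exists p, s.
by rewrite -Hb => /begE [p' [s' [-> _]]]; apply/subE; exists p', s'.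
Qed.

Lemma inR_sub y z : inR y z -> Substr y z.
Proof.
case=> x [/subE [p [s Hy]] [Hb _]].
have : size p + size x \in EndPos y x by apply/endE; exists p, s.
by rewrite -Hb => /endE [p' [s' [-> _]]]; apply/subE; exists p', s'.
Qed.

Lemma inL_max y z w : inL y z -> BegPos y w = BegPos y z -> size w <= size z.
Proof. by case=> x [_ [Hb Hm]] H; apply: Hm; rewrite H. Qed.

Lemma inL_intro y z : Substr y z ->
  (forall w, BegPos y w = BegPos y z -> size w <= size z) -> inL y z.
Proof. by move=> Hs Hm; exists z. Qed.

Lemma inR_intro y z : Substr y z ->
  (forall w, EndPos y w = EndPos y z -> size w <= size z) -> inR y z.
Proof. by move=> Hs Hm; exists z. Qed.

Lemma end_ext y w v p s : EndPos y v = EndPos y w -> size w <= size v ->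
  y = p ++ w ++ s ->
  exists p', p = p' ++ take (size v - size w) v /\ v = take (size v - size w) v ++ w.
Proof.
move=> He Hle Hy.
have : size p + size w \in EndPos y w by apply/endE; exists p, s.
rewrite -He => /endE [p2 [s2 [Hy2 Hsz]]].
have E1 : p2 ++ v = p ++ w.
  have : (p2 ++ v) ++ s2 = (p ++ w) ++ s by rewrite -!catA -Hy2 -Hy.
  by move/eqP; rewrite eqseq_cat ?size_cat // => /andP [/eqP].
have E2 : (p2 ++ take (size v - size w) v) ++ drop (size v - size w) v = p ++ w.
  by rewrite -catA cat_take_drop.
move/eqP: E2; rewrite eqseq_cat; last first.
  by rewrite size_cat size_take; case: ltnP; lia.
case/andP=> /eqP <- /eqP Hd; exists p2; split=> //.
by rewrite -[X in _ = _ ++ X]Hd cat_take_drop.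
Qed.


Lemma chain y x (al : seq T) (a0 : T) (n : nat) :
  n < size al ->
  Substr y (al ++ x) ->
  (forall k, 0 < k <= n -> ~ inR y (drop k al ++ x)) ->
  forall k, k <= n -> forall p s, y = p ++ (drop k al ++ x) ++ s ->
  exists q, p = q ++ take k al.
Proof.
move=> Hn Hsub HR; elim=> [|k IH] Hk p s Hy.
  by exists p; rewrite take0 cats0.
set w := drop k.+1 al ++ x.
have Hkl : k < size al by lia.
have Hw : Substr y w.
  case/subE: Hsub => p0 [s0 Hy0]; apply/subE.
  exists (p0 ++ take k.+1 al), s0; by rewrite Hy0 /w -!catA (catA (take _ _)) cat_take_drop.
have [v [Hev Hlt]] : exists v, EndPos y v = EndPos y w /\ size w < size v.
  apply: NNPP => Hno; apply: (HR k.+1); first lia.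
  apply: inR_intro => // v Hv; rewrite leqNgt; apply/negP => Hl.
  by apply: Hno; exists v.
set m := size v - size w.
have Hm : 0 < m by rewrite /m; lia.
have Hv1 : size (take m v) = m by rewrite size_take; case: ltnP => //; rewrite /m; lia.
case/subE: Hsub => p0 [s0 Hy0].
have Hy0' : y = (p0 ++ take k.+1 al) ++ w ++ s0.
  by rewrite Hy0 /w -!catA (catA (take _ _)) cat_take_drop.
have [p1 [Hp1 _]] := end_ext Hev (ltnW Hlt) Hy0'.
have [p2 [Hp2 _]] := end_ext Hev (ltnW Hlt) Hy.
move: Hp1 Hp2; rewrite -/m (take_nth a0 Hkl).
case/lastP E : (take m v) => [|v1 b]; first by move: Hv1; rewrite E /=; lia.
rewrite -!rcons_cat => /rcons_inj [_ <-] Hp.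
have Hy2 : y = (p2 ++ v1) ++ (drop k al ++ x) ++ s.
  by rewrite Hy Hp (drop_nth a0 Hkl) -cats1 -!catA.
have [q Hq] := IH (ltnW Hk) _ _ Hy2.
by exists q; rewrite Hp Hq rcons_cat.
Qed.

End Aux.

Lemma revLR (T : eqType) (y u : seq T) : inRevLR y (rev u) -> inL y u \/ inR y u.
Proof. by case=> z [H /(can_inj (@revK _)) ->]. Qed.

Lemma nrevLR (T : eqType) (y u : seq T) : ~ inRevLR y (rev u) -> ~ inL y u /\ ~ inR y u.
Proof. by move=> H; split => Hc; apply: H; exists u; split=> //; [left|right]. Qed.

(* y = y' ++ [c] with c not occurring in y'; a = last character of alpha
   (alpha is nonempty by the definition of backward_edge). *)
Theorem theorem7 (T : finType) (y' : seq T) (c : T) (x alpha : seq T) :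
  c \notin y' ->
  backward_edge (rcons y' c) x alpha ->
  ((inL (rcons y' c) x /\ ~ inL (rcons y' c) (alpha ++ x)) <->
   implicit_weiner_link (rcons y' c) x (last c alpha)).
Proof.
move=> _ [Hne [_ [Hab Hint]]].
set y := rcons y' c.
case/lastP E: alpha Hne => [//|b a] _; rewrite last_rcons.
rewrite -E in Hab Hint *.
have Hal : alpha = b ++ [:: a] by rewrite E cats1.
have Hsz : size alpha = (size b).+1 by rewrite Hal size_cat addn1.
have Hsub : Substr y (alpha ++ x).
  rewrite -rev_cat in Hab.
  by case: (revLR Hab) => [/inL_sub|/inR_sub].
have Hint' : forall k, 0 < k < size alpha ->
    ~ inL y (drop k alpha ++ x) /\ ~ inR y (drop k alpha ++ x).
  move=> k Hk; apply: nrevLR.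
  have Hk2 : k <= size alpha by case/andP: Hk => _ /ltnW.
  have := Hint (size alpha - k); rewrite take_rev subKn //.
  rewrite rev_cat; apply; case/andP: Hk => H1 H2; apply/andP; split; rewrite ?subn_gt0 ?ltn_subrL ?H1 ?H2 //; by apply: leq_ltn_trans H2.
have Hdb : drop (size b) alpha ++ x = a :: x by rewrite Hal drop_size_cat.
have Hax : alpha ++ x = b ++ a :: x by rewrite Hal -catA.
split.
  case=> HxL HnL; split; first split=> //.
    case/subE: Hsub => p [s Hy]; apply/subE; exists (p ++ b), s.
    by rewrite Hy Hax !catA.
  clear E; case: b Hal Hsz Hdb Hax => [|b0 b] Hal Hsz Hdb Hax.
    by rewrite -Hdb drop0.
  rewrite -Hdb; apply: (fun H => (Hint' _ H).1); by rewrite Hsz /= ltnSn.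
case=> [[HxL Hsax] HnL]; split=> // HL; apply: HnL.
have Hch : forall p s, y = p ++ (a :: x) ++ s -> exists q, p = q ++ b.
  move=> p s Hy.
  have := @chain _ y x alpha a (size b) _ Hsub _ (size b) (leqnn _) p s.
  rewrite Hdb Hal take_size_cat //; apply=> //; first by rewrite size_cat /= addn1.
  move=> k Hk; rewrite -Hal; apply: (Hint' k _).2; rewrite Hsz; case/andP: Hk => H1 H2; by rewrite H1 /= ltnS.
apply: inL_intro => // w Hw.
have Hbw : BegPos y (b ++ w) = BegPos y (alpha ++ x).
  apply: begEq => i; split.
    case=> p [s [Hy Hi]].
    have : size (p ++ b) \in BegPos y w by apply/begE; exists (p ++ b), s; rewrite Hy !catA.
    rewrite Hw => /begE [p3 [s3 [Hy3 Hs3]]].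
    have [q Hq] := Hch _ _ Hy3.
    exists q, s3; split; first by rewrite Hy3 Hq Hax !catA.
    by move: Hs3; rewrite Hq !size_cat Hi; lia.
  case=> p [s [Hy Hi]].
  have : size (p ++ b) \in BegPos y (a :: x).
    by apply/begE; exists (p ++ b), s; rewrite Hy Hax !catA.
  rewrite -Hw => /begE [p3 [s3 [Hy3 Hs3]]].
  have : (p ++ b) ++ (a :: x ++ s) = p3 ++ (w ++ s3).
    by rewrite -Hy3 Hy Hax -!catA.
  move/eqP; rewrite eqseq_cat // => /andP [/eqP Hp _].
  exists p, s3; split=> //; by rewrite Hy3 -Hp -!catA.
have := inL_max HL Hbw.
by rewrite !size_cat Hsz /=; lia.
Qed.
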